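(* Let $D$ be a closed $\forall^+$ type of system $\mathcal F$ not containing the type constant $O$. Then $D$ is a syntactical data type, i.e. $D$ is both an input type and an output type.
   Context: $\lambda$-terms are those of the untyped $\lambda$-calculus; $Fv(t)$ denotes the free variables of $t$; a term is normal if it contains no $\beta$-redex. Types of system $\mathcal F$ are built from type variables and type constants (atomic, not quantifiable; $O$ is such a constant) with $\rightarrow$ and $\forall$; only proper types are considered (in every $\forall X A$, $X$ occurs free in $A$). Typing $\Gamma\vdash_{\mathcal F} t:A$ is given by: (ax) $\Gamma \vdash x_i : A_i$ for $x_i:A_i\in\Gamma$; ($\rightarrow_i$) from $\Gamma, x:B \vdash t : C$ infer $\Gamma \vdash \lambda x t : B \rightarrow C$; ($\rightarrow_e$) from $\Gamma \vdash u : B\rightarrow C$ and $\Gamma \vdash v : B$ infer $\Gamma \vdash (u)v : C$; ($\forall_i$) from $\Gamma \vdash t : A$, $X$ not free in $\Gamma$, infer $\Gamma \vdash t : \forall X A$; ($\forall_e$) from $\Gamma \vdash t : \forall X A$ infer $\Gamma \vdash t : A[C/X]$ for any type $C$. $\mathcal F_0$ is $\mathcal F$ without ($\forall_e$). Input type: a closed type $E$ such that for every normal $t$, $\vdash_{\mathcal F} t:E$ implies $\vdash_{\mathcal F_0} t:E$. Output type: a closed type $S$ not containing $O$ such that for every normal $t$ and variable $\alpha$, $\alpha:O\vdash_{\mathcal F} t:S$ implies $\alpha\notin Fv(t)$. The classes $\forall^+$, $\forall^-$: every type variable is both; if $A$ is $\forall^+$ (resp. $\forall^-$) and $B$ is $\forall^-$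 (resp. $\forall^+$) then $B\rightarrow A$ is $\forall^+$ (resp. $\forall^-$); if $A$ is $\forall^+$ and $X$ is free in $A$ then $\forall XA$ is $\forall^+$. *)

(* Defs.v *)
(* System F with type constants, Curry-style typing of
   untyped (named) lambda-terms. Types use de Bruijn indices for type
   variables; term variables are named by nat. *)
From Stdlib Require Import Arith List.
Import ListNotations.

Inductive term : Type :=
| Var : nat -> term
| Lam : nat -> term -> term
| App : term -> term -> term.

Fixpoint free_in (x : nat) (t : term) : Prop :=
  match t with
  | Var y => x = y
  | Lam y u => x <> y /\ free_in x u
  | App u v => free_in x u \/ free_in x v
  end.

Fixpoint normal (t : term) : Prop :=
  match t with
  | Var _ => True
  | Lam _ u => normal u
  | App (Lam _ _) _ => False
  | App u v => normal u /\ normal v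
  end.

Inductive ty : Type :=
| TVar : nat -> ty
| TConst : nat -> ty
| TArr : ty -> ty -> ty
| TAll : ty -> ty.

Definition O_const : ty := TConst 0.

Fixpoint occurs (k : nat) (A : ty) : Prop :=
  match A with
  | TVar n => n = k
  | TConst _ => False
  | TArr B C => occurs k B \/ occurs k C
  | TAll B => occurs (S k) B
  end.

Fixpoint proper (A : ty) : Prop :=
  match A with
  | TVar _ | TConst _ => True
  | TArr B C => proper B /\ proper C
  | TAll B => occurs 0 B /\ proper B
  end.

Fixpoint closed_at (k : nat) (A : ty) : Prop :=
  match A with
  | TVar n => n < k
  | TConst _ => True
  | TArr B C => closed_at k B /\ closed_at k C
  | TAll B => closed_at (S k) B
  end.

Definition closed_ty (A : ty) : Prop := closed_at 0 A.

Fixpoint contains_const (c : nat) (A : ty) : Prop :=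
  match A with
  | TVar _ => False
  | TConst c' => c = c'
  | TArr B C => contains_const c B \/ contains_const c C
  | TAll B => contains_const c B
  end.

Definition contains_O (A : ty) : Prop := contains_const 0 A.

Fixpoint tlift (d c : nat) (A : ty) : ty :=
  match A with
  | TVar n => if n <? c then TVar n else TVar (n + d)
  | TConst k => TConst k
  | TArr B C => TArr (tlift d c B) (tlift d c C)
  | TAll B => TAll (tlift d (S c) B)
  end.

(** capture-avoiding substitution of C for the variable of index k in A
    (variables above k are decremented: this is the body of a removed
    binder). *)
Fixpoint tsubst (k : nat) (C : ty) (A : ty) : ty :=
  match A with
  | TVar n =>
      if n <? k then TVar n
      else if n =? k then tlift k 0 C
      else TVar (n - 1)
  | TConst c => TConst c
  | TArr B D => TArr (tsubst k C B) (tsubst k C D)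
  | TAll B => TAll (tsubst (S k) C B)
  end.

(** A[C/X] where X is the variable bound by forall X A *)
Definition inst (A C : ty) : ty := tsubst 0 C A.

(** contexts: x1:A1, ..., the most recent declaration first *)
Definition context := list (nat * ty).

Fixpoint lookup (G : context) (x : nat) : option ty :=
  match G with
  | [] => None
  | (y, A) :: G' => if x =? y then Some A else lookup G' x
  end.

(** shifting the context when going under a type binder: this renders the
    side condition "X not free in Gamma" of the forall-introduction rule *)
Definition shift_ctx (G : context) : context :=
  map (fun p => (fst p, tlift 1 0 (snd p))) G.

(** Typing; [elim = true] gives system F, [elim = false] gives F_0
    (no forall-elimination rule). Only proper types are used. *)
Inductive typing (elim : bool) : context -> term -> ty -> Prop :=
| T_ax : forall G x A, lookup G x = Some A -> typing elim G (Var x) A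
| T_arr_i : forall G x t B C,
    proper B -> typing elim ((x, B) :: G) t C ->
    typing elim G (Lam x t) (TArr B C)
| T_arr_e : forall G u v B C,
    typing elim G u (TArr B C) -> typing elim G v B ->
    typing elim G (App u v) C
| T_all_i : forall G t A,
    occurs 0 A -> typing elim (shift_ctx G) t A ->
    typing elim G t (TAll A)
| T_all_e : forall G t A C,
    elim = true -> proper C -> typing elim G t (TAll A) ->
    typing elim G t (inst A C).

Definition typF := typing true.
Definition typF0 := typing false.

Definition input_type (E : ty) : Prop :=
  closed_ty E /\ proper E /\
  forall t, normal t -> typF [] t E -> typF0 [] t E.

Definition output_type (S : ty) : Prop :=
  closed_ty S /\ proper S /\ ~ contains_O S /\
  forall t alpha, normal t -> typF [(alpha, O_const)] t S -> ~ free_in alpha t.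

Inductive forall_pos : ty -> Prop :=
| FP_var : forall n, forall_pos (TVar n)
| FP_arr : forall B A, forall_neg B -> forall_pos A -> forall_pos (TArr B A)
| FP_all : forall A, forall_pos A -> occurs 0 A -> forall_pos (TAll A)
with forall_neg : ty -> Prop :=
| FN_var : forall n, forall_neg (TVar n)
| FN_arr : forall B A, forall_pos B -> forall_neg A -> forall_neg (TArr B A).

Definition syntactical_data_type (D : ty) : Prop :=
  input_type D /\ output_type D.

(* Main.v *)
Require Import Defs.
From Stdlib Require Import Arith List Lia.
Import ListNotations.

Definition upr (xi : nat -> nat) (n : nat) : nat :=
  match n with 0 => 0 | S m => S (xi m) end.

Fixpoint tren (xi : nat -> nat) (A : ty) : ty :=
  match A with
  | TVar n => TVar (xi n)
  | TConst c => TConst c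
  | TArr B C => TArr (tren xi B) (tren xi C)
  | TAll B => TAll (tren (upr xi) B)
  end.

Definition up (s : nat -> ty) (n : nat) : ty :=
  match n with 0 => TVar 0 | S m => tren S (s m) end.

Fixpoint tsub (s : nat -> ty) (A : ty) : ty :=
  match A with
  | TVar n => s n
  | TConst c => TConst c
  | TArr B C => TArr (tsub s B) (tsub s C)
  | TAll B => TAll (tsub (up s) B)
  end.

Definition scons (D : ty) (s : nat -> ty) (n : nat) : ty :=
  match n with 0 => D | S m => s m end.

Lemma tren_ext : forall A xi zeta, (forall n, xi n = zeta n) -> tren xi A = tren zeta A.
Proof.
  induction A; intros xi zeta H; simpl; f_equal; auto.
  apply IHA; intros [|n]; simpl; auto.
Qed.

Lemma tsub_ext : forall A s t, (forall n, s n = t n) -> tsub s A = tsub t A.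
Proof.
  induction A; intros s t H; simpl; f_equal; auto.
  apply IHA; intros [|n]; simpl; [reflexivity | rewrite H; reflexivity].
Qed.

Lemma tren_tren : forall A xi zeta, tren xi (tren zeta A) = tren (fun n => xi (zeta n)) A.
Proof.
  induction A; intros; simpl; f_equal; auto.
  rewrite IHA; apply tren_ext; intros [|n]; reflexivity.
Qed.

Lemma tsub_tren : forall A s xi, tsub s (tren xi A) = tsub (fun n => s (xi n)) A.
Proof.
  induction A; intros; simpl; f_equal; auto.
  rewrite IHA; apply tsub_ext; intros [|n]; reflexivity.
Qed.

Lemma tren_tsub : forall A s xi, tren xi (tsub s A) = tsub (fun n => tren xi (s n)) A.
Proof.
  induction A; intros; simpl; f_equal; auto.
  rewrite IHA; apply tsub_ext; intros [|n]; simpl; [reflexivity|].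
  rewrite !tren_tren; apply tren_ext; reflexivity.
Qed.

Lemma tsub_tsub : forall A s t, tsub s (tsub t A) = tsub (fun n => tsub s (t n)) A.
Proof.
  induction A; intros; simpl; f_equal; auto.
  rewrite IHA; apply tsub_ext; intros [|n]; simpl; [reflexivity|].
  rewrite tsub_tren, tren_tsub; apply tsub_ext; reflexivity.
Qed.

Lemma tsub_id_gen : forall A s, (forall n, s n = TVar n) -> tsub s A = A.
Proof.
  induction A; intros s H; simpl; f_equal; auto.
  apply IHA; intros [|n]; simpl; [reflexivity| rewrite H; reflexivity].
Qed.

Lemma tsub_id : forall A, tsub TVar A = A.
Proof. intros; apply tsub_id_gen; reflexivity. Qed.

Lemma tsub_var : forall A xi, tsub (fun n => TVar (xi n)) A = tren xi A.
Proof.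
  induction A; intros; simpl; f_equal; auto.
  rewrite <- (IHA (upr xi)); apply tsub_ext; intros [|n]; reflexivity.
Qed.

Lemma tlift_ren : forall A d c, tlift d c A = tren (fun n => if n <? c then n else n + d) A.
Proof.
  induction A; intros; simpl; f_equal; auto.
  - destruct (n <? c); reflexivity.
  - rewrite IHA; apply tren_ext; intros [|n]; simpl; [reflexivity|].
    replace (S n <? S c) with (n <? c) by reflexivity.
    destruct (n <? c); reflexivity.
Qed.

Lemma tlift10 : forall A, tlift 1 0 A = tren S A.
Proof.
  intros; rewrite tlift_ren; apply tren_ext; intros n.
  destruct (Nat.ltb_spec n 0); lia.
Qed.

Lemma tlift00 : forall A, tlift 0 0 A = A.
Proof.
  intros; rewrite tlift_ren, <- tsub_var; apply tsub_id_gen; intros n.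
  destruct (Nat.ltb_spec n 0); f_equal; lia.
Qed.

Definition sig (k : nat) (C : ty) (n : nat) : ty :=
  if n <? k then TVar n else if n =? k then tlift k 0 C else TVar (n - 1).

Lemma tsubst_sub : forall A k C, tsubst k C A = tsub (sig k C) A.
Proof.
  induction A; intros; simpl; f_equal; auto.
  rewrite IHA; apply tsub_ext; intros [|n]; [reflexivity|].
  unfold sig; simpl up.
  replace (S n <? S k) with (n <? k) by reflexivity.
  replace (S n =? S k) with (n =? k) by reflexivity.
  destruct (Nat.ltb_spec n k); [reflexivity|].
  destruct (Nat.eqb_spec n k).
  - rewrite !tlift_ren, tren_tren; apply tren_ext; intros m.
    destruct (Nat.ltb_spec m 0); lia.
  - simpl; f_equal; lia.
Qed.

Lemma inst_eq : forall A C, inst A C = tsub (scons C TVar) A.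
Proof.
  intros; unfold inst; rewrite tsubst_sub; apply tsub_ext; intros [|n]; unfold sig; simpl.
  - apply tlift00.
  - f_equal; lia.
Qed.

Lemma inst_up : forall A s D, inst (tsub (up s) A) D = tsub (scons D s) A.
Proof.
  intros; rewrite inst_eq, tsub_tsub; apply tsub_ext; intros [|n]; simpl; [reflexivity|].
  rewrite tsub_tren; apply tsub_id_gen; reflexivity.
Qed.

Lemma inst_sub : forall A C s, tsub s (inst A C) = inst (tsub (up s) A) (tsub s C).
Proof.
  intros; rewrite inst_up, inst_eq, tsub_tsub; apply tsub_ext; intros [|n]; reflexivity.
Qed.

Lemma up_shift : forall T s, tsub (up s) (tren S T) = tren S (tsub s T).
Proof. intros; rewrite tsub_tren, tren_tsub; apply tsub_ext; reflexivity. Qed.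

Lemma scons_shift : forall T D s, tsub (scons D s) (tren S T) = tsub s T.
Proof. intros; rewrite tsub_tren; apply tsub_ext; reflexivity. Qed.

Lemma occ_ren : forall A xi k, occurs k A -> occurs (xi k) (tren xi A).
Proof.
  induction A; intros xi k H; simpl in *.
  - subst; reflexivity.
  - exact H.
  - destruct H; [left|right]; auto.
  - exact (IHA (upr xi) (S k) H).
Qed.

Lemma occ_ren_not : forall A xi k, (forall m, xi m <> k) -> ~ occurs k (tren xi A).
Proof.
  induction A; intros xi k H; simpl.
  - intros E; apply (H n); auto.
  - auto.
  - intros [E|E]; [eapply IHA1|eapply IHA2]; eauto.
  - apply IHA; intros [|m]; simpl; [discriminate|].
    intros E; injection E; apply H.
Qed.

Lemma occ_sub : forall A s k m, occurs k A -> occurs m (s k) -> occurs m (tsub s A).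
Proof.
  induction A; intros s k m H1 H2; simpl in *.
  - subst; exact H2.
  - exact H1.
  - destruct H1; [left|right]; eauto.
  - apply (IHA (up s) (S k) (S m) H1); simpl; apply (occ_ren _ S m H2).
Qed.

Lemma proper_ren : forall A xi, proper A -> proper (tren xi A).
Proof.
  induction A; intros xi H; simpl in *; auto.
  - destruct H; split; auto.
  - destruct H as [H1 H2]; split; [apply (occ_ren _ (upr xi) 0 H1) | auto].
Qed.

Lemma proper_sub : forall A s, (forall n, proper (s n)) -> proper A -> proper (tsub s A).
Proof.
  induction A; intros s Hs H; simpl in *; auto.
  - destruct H; split; auto.
  - destruct H as [H1 H2]; split.
    + apply (occ_sub _ _ 0 0 H1); simpl; reflexivity.
    + apply IHA; auto. intros [|n]; simpl; auto. apply proper_ren; auto.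
Qed.

Lemma fpn_ren : forall A xi, (forall_pos A -> forall_pos (tren xi A)) /\
                             (forall_neg A -> forall_neg (tren xi A)).
Proof.
  induction A; intros xi; split; intros H; simpl; inversion H; subst.
  - constructor.
  - constructor.
  - destruct (IHA1 xi), (IHA2 xi); constructor; auto.
  - destruct (IHA1 xi), (IHA2 xi); constructor; auto.
  - constructor; [apply IHA; auto | apply (occ_ren _ (upr xi) 0 H2)].
Qed.

Fixpoint spine_ok (A : ty) : Prop :=
  match A with TArr _ C => spine_ok C | TAll _ => False | _ => True end.

Fixpoint gen_arrow (A : ty) : Prop :=
  match A with TArr _ _ => True | TAll B => gen_arrow B | _ => False end.

Lemma spine_ren : forall A xi, spine_ok A -> spine_ok (tren xi A).
Proof. induction A; intros; simpl in *; auto. Qed.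

Lemma ga_sub : forall A s, gen_arrow A -> gen_arrow (tsub s A).
Proof. induction A; intros; simpl in *; auto; contradiction. Qed.

Lemma neg_spine : forall A, forall_neg A -> spine_ok A.
Proof. induction A; intros H; inversion H; subst; simpl; auto. Qed.

Definition ctx_sub (s : nat -> ty) (G : context) : context :=
  map (fun p => (fst p, tsub s (snd p))) G.

Lemma lookup_sub : forall s G x, lookup (ctx_sub s G) x = option_map (tsub s) (lookup G x).
Proof.
  intros s G x; induction G as [|[y T] G IH]; simpl; auto.
  destruct (x =? y); auto.
Qed.

Lemma lookup_shift : forall G x, lookup (shift_ctx G) x = option_map (tlift 1 0) (lookup G x).
Proof.
  intros G x; induction G as [|[y T] G IH]; simpl; auto.
  destruct (x =? y); auto.
Qed.

Lemma ctx_sub_shift : forall s G, ctx_sub (up s) (shift_ctx G) = shift_ctx (ctx_sub s G).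
Proof.
  intros s G; induction G as [|[y T] G IH]; simpl; auto.
  f_equal; [|exact IH]. rewrite !tlift10, up_shift; reflexivity.
Qed.

Lemma ctx_sub_scons : forall D s G, ctx_sub (scons D s) (shift_ctx G) = ctx_sub s G.
Proof.
  intros D s G; induction G as [|[y T] G IH]; simpl; auto.
  f_equal; [|exact IH]. rewrite !tlift10, scons_shift; reflexivity.
Qed.

Lemma ctx_sub_id : forall G, ctx_sub TVar G = G.
Proof.
  intros G; induction G as [|[y T] G IH]; simpl; auto.
  rewrite tsub_id, IH; reflexivity.
Qed.

Lemma ctx_sub_S : forall G, ctx_sub (fun n => TVar (S n)) G = shift_ctx G.
Proof.
  intros G; induction G as [|[y T] G IH]; simpl; auto.
  rewrite tsub_var, tlift10, IH; reflexivity.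
Qed.

Lemma typing_sub : forall e G t A, typing e G t A ->
  forall s, (forall n, proper (s n)) -> typing e (ctx_sub s G) t (tsub s A).
Proof.
  induction 1; intros s Hs.
  - constructor; rewrite lookup_sub, H; reflexivity.
  - simpl; constructor; [apply proper_sub; auto | apply (IHtyping s Hs)].
  - econstructor; [apply IHtyping1 | apply IHtyping2]; auto.
  - simpl; constructor.
    + apply (occ_sub _ _ 0 0 H); reflexivity.
    + rewrite <- ctx_sub_shift; apply IHtyping.
      intros [|n]; simpl; auto. apply proper_ren; auto.
  - rewrite inst_sub; apply T_all_e; auto.
    apply proper_sub; auto.
Qed.

Lemma typing_strip : forall G t A, typing true G t (TAll A) -> typing true (shift_ctx G) t A.
Proof.
  intros G t A H.
  pose proof (typing_sub _ _ _ _ H (fun n => TVar (S n)) (fun n => I)) as H1.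
  rewrite ctx_sub_S in H1; simpl in H1.
  pose proof (@T_all_e true _ t _ (TVar 0) eq_refl I H1) as H2.
  rewrite inst_up, tsub_id_gen in H2; [exact H2|].
  intros [|n]; reflexivity.
Qed.

Inductive AI : ty -> ty -> ty -> Prop :=
| AI_arr : forall B C, AI (TArr B C) B C
| AI_all : forall A D B C, proper D -> AI (inst A D) B C -> AI (TAll A) B C.

Lemma lam_gen : forall e G t A, typing e G t A -> forall x u, t = Lam x u ->
  gen_arrow A /\ forall s, (forall n, proper (s n)) -> forall B C,
    AI (tsub s A) B C -> typing e ((x, B) :: ctx_sub s G) u C.
Proof.
  induction 1; intros x0 u0 Heq; try discriminate.
  - inversion Heq; subst. split; [exact I|].
    intros s Hs B' C' HAI. simpl in HAI. inversion HAI; subst.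
    exact (typing_sub _ _ _ _ H0 s Hs).
  - destruct (IHtyping x0 u0 Heq) as [Hga IH]. split; [exact Hga|].
    intros s Hs B C HAI. simpl in HAI. inversion HAI as [|A0 D B0 C0 HD HI]; subst.
    rewrite inst_up in HI.
    specialize (IH (scons D s)). rewrite ctx_sub_scons in IH.
    apply IH; auto. intros [|n]; simpl; auto.
  - destruct (IHtyping x0 u0 Heq) as [Hga IH]. split.
    + rewrite inst_eq; apply ga_sub; exact Hga.
    + intros s Hs B' C' HAI. rewrite inst_sub in HAI.
      apply IH; auto. simpl. apply (AI_all _ (tsub s C)); [apply proper_sub; auto | exact HAI].
Qed.

Lemma lam_arrow : forall e G x u B C, typing e G (Lam x u) (TArr B C) ->
  typing e ((x, B) :: G) u C.
Proof.
  intros e G x u B C H.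
  destruct (lam_gen _ _ _ _ H x u eq_refl) as [_ H'].
  specialize (H' TVar (fun n => I) B C). rewrite ctx_sub_id in H'.
  apply H'. rewrite tsub_id. constructor.
Qed.

Lemma lam_not_var : forall e G x u n, typing e G (Lam x u) (TVar n) -> False.
Proof.
  intros e G x u n H. destruct (lam_gen _ _ _ _ H x u eq_refl) as [H' _]. exact H'.
Qed.

Fixpoint head_is (x : nat) (t : term) : Prop :=
  match t with Var y => y = x | App u _ => head_is x u | Lam _ _ => False end.

Fixpoint size (t : term) : nat :=
  match t with Var _ => 1 | Lam _ u => S (size u) | App u v => S (size u + size v) end.

Inductive NT (P : term -> ty -> Prop) (x : nat) (T : ty) : term -> ty -> Prop :=
| NT_var : NT P x T (Var x) T
| NT_app : forall u v B C, NT P x T u (TArr B C) -> P v B -> NT P x T (App u v) C.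

Lemma NT_suffix : forall P x T t A, NT P x T t A -> spine_ok T ->
  spine_ok A /\ (forall k, occurs k A -> occurs k T).
Proof.
  induction 1; intros Hs; [split; auto|].
  destruct (IHNT Hs) as [H1 H2]. split; [exact H1|].
  intros k Hk; apply H2; simpl; right; exact Hk.
Qed.

Lemma head_lemma : forall e G t A, typing e G t A -> forall x, head_is x t ->
  exists T, lookup G x = Some T /\ (spine_ok T -> NT (typing e G) x T t A).
Proof.
  induction 1; intros x0 Hh; simpl in Hh.
  - subst. exists A. split; auto. intros _. constructor.
  - contradiction.
  - destruct (IHtyping1 x0 Hh) as [T [HT HN]]. exists T; split; auto.
    intros Hs; econstructor; [apply HN; auto | exact H0].
  - destruct (IHtyping x0 Hh) as [T' [HT' HN]]. rewrite lookup_shift in HT'.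
    destruct (lookup G x0) as [T|] eqn:E; simpl in HT'; [|discriminate].
    injection HT' as <-. exists T; split; auto. intros Hs. exfalso.
    rewrite tlift10 in HN.
    destruct (NT_suffix _ _ _ _ _ (HN (spine_ren _ _ Hs)) (spine_ren _ _ Hs)) as [_ Hocc].
    apply (occ_ren_not T S 0); [intros m; discriminate | apply Hocc; exact H].
  - destruct (IHtyping x0 Hh) as [T [HT HN]]. exists T; split; auto.
    intros Hs. exfalso. destruct (NT_suffix _ _ _ _ _ (HN Hs) Hs) as [Hsp _]. exact Hsp.
Qed.

Lemma NT_const : forall P x T t A, NT P x T t A -> forall c, T = TConst c -> A = TConst c.
Proof.
  induction 1; intros c Hc; [exact Hc|].
  discriminate (IHNT c Hc).
Qed.

Lemma normal_app : forall u v, normal (App u v) -> normal u /\ normal v.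
Proof. intros u v; destruct u; simpl; tauto. Qed.

Lemma NT_weaken : forall P x T t A, NT P x T t A -> forall_neg T -> proper T ->
  forall Q : term -> ty -> Prop,
  (forall v B, P v B -> forall_pos B -> proper B -> size v < size t -> normal v -> Q v B) ->
  normal t -> NT Q x T t A /\ forall_neg A /\ proper A.
Proof.
  induction 1; intros Hn Hp Q HQ Hnorm.
  - split; [constructor| auto].
  - apply normal_app in Hnorm as [Hu Hv].
    destruct (IHNT Hn Hp Q) as [HN [Hneg Hpr]].
    { intros v' B' H1 H2 H3 H4 H5; apply HQ; auto; simpl; lia. }
    { exact Hu. }
    inversion Hneg; subst. destruct Hpr as [HpB HpC].
    split; [econstructor; [exact HN | apply HQ; auto; simpl; lia] | auto].
Qed.

Lemma NT_F0 : forall G x T t A, NT (typing false G) x T t A -> lookup G x = Some T ->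
  typing false G t A.
Proof. induction 1; intros; [constructor; auto | econstructor; eauto]. Qed.

Lemma NT_free : forall a x T t A, NT (fun v B => ~ free_in a v) x T t A -> x <> a ->
  ~ free_in a t.
Proof.
  induction 1; intros Hx; simpl.
  - intros E; apply Hx; auto.
  - intros [H1|H1]; [apply IHNT; auto | apply H0; auto].
Qed.

Lemma neutral_head : forall t, normal t -> (forall y u, t <> Lam y u) -> exists x, head_is x t.
Proof.
  induction t; intros Hn Hl.
  - exists n; reflexivity.
  - exfalso; eapply Hl; reflexivity.
  - destruct t1 as [n|y b|p q].
    + exists n; reflexivity.
    + simpl in Hn; contradiction.
    + destruct (IHt1 (proj1 (normal_app _ _ Hn))) as [x Hx]; [intros; discriminate|].
      exists x; exact Hx.
Qed.

Definition ctx_neg (G : context) :=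
  forall y T, lookup G y = Some T -> forall_neg T /\ proper T.

Lemma ctx_neg_shift : forall G, ctx_neg G -> ctx_neg (shift_ctx G).
Proof.
  intros G H y T HT; rewrite lookup_shift in HT.
  destruct (lookup G y) eqn:E; simpl in HT; [|discriminate].
  injection HT as <-. destruct (H _ _ E). rewrite tlift10.
  split; [apply fpn_ren; auto | apply proper_ren; auto].
Qed.

Lemma ctx_neg_cons : forall G x B, ctx_neg G -> forall_neg B -> proper B -> ctx_neg ((x, B) :: G).
Proof.
  intros G x B H H1 H2 y T; simpl; destruct (y =? x); [intros E; injection E as <-; auto | apply H].
Qed.

Lemma input_neutral : forall n t A G,
  (forall t', size t' < n -> forall A G, typing true G t' A -> normal t' ->
     forall_pos A -> proper A -> ctx_neg G -> typing false G t' A) ->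
  size t < S n -> (forall y u, t <> Lam y u) ->
  typing true G t A -> normal t -> ctx_neg G -> typing false G t A.
Proof.
  intros n t A G IHn Hs Hl Ht Hn Hctx.
  destruct (neutral_head _ Hn Hl) as [x Hx].
  destruct (head_lemma _ _ _ _ Ht x Hx) as [T [HT HN]].
  destruct (Hctx _ _ HT) as [HnT HpT].
  destruct (NT_weaken _ _ _ _ _ (HN (neg_spine _ HnT)) HnT HpT (typing false G))
    as [HN' _]; [ intros v' B' H1 H2 H3 H4 H5; apply IHn; auto; lia | exact Hn |].
  exact (NT_F0 _ _ _ _ _ HN' HT).
Qed.

Lemma input_main : forall n t, size t < n -> forall A G, typing true G t A -> normal t ->
  forall_pos A -> proper A -> ctx_neg G -> typing false G t A.
Proof.
  induction n as [|n IHn]; intros t Hs; [lia|].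
  induction A as [m|c|B _ C _|A IHA]; intros G Ht Hn Hpos Hpr Hctx.
  - destruct t as [y|y u|u v].
    + eapply input_neutral; eauto; intros; discriminate.
    + exfalso; eapply lam_not_var; eauto.
    + eapply input_neutral; eauto; intros; discriminate.
  - inversion Hpos.
  - destruct t as [y|y u|u v].
    + eapply input_neutral; eauto; intros; discriminate.
    + apply lam_arrow in Ht; inversion Hpos; subst; destruct Hpr.
      constructor; auto; apply IHn; auto; [simpl in Hs; lia | apply ctx_neg_cons; auto].
    + eapply input_neutral; eauto; intros; discriminate.
  - inversion Hpos; subst. destruct Hpr as [Hocc Hpr']. constructor; auto.
    apply IHA; auto; [apply typing_strip; auto | apply ctx_neg_shift; auto].
Qed.

Definition ctx_out (a : nat) (G : context) :=
  lookup G a = Some O_const /\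
  forall y T, y <> a -> lookup G y = Some T -> forall_neg T /\ proper T.

Lemma ctx_out_shift : forall a G, ctx_out a G -> ctx_out a (shift_ctx G).
Proof.
  intros a G [H0 H]. split.
  - rewrite lookup_shift, H0; reflexivity.
  - intros y T Hy HT; rewrite lookup_shift in HT.
    destruct (lookup G y) eqn:E; simpl in HT; [|discriminate].
    injection HT as <-. destruct (H _ _ Hy E). rewrite tlift10.
    split; [apply fpn_ren; auto | apply proper_ren; auto].
Qed.

Lemma ctx_out_cons : forall a G x B, ctx_out a G -> x <> a -> forall_neg B -> proper B ->
  ctx_out a ((x, B) :: G).
Proof.
  intros a G x B [H0 H] Hx H1 H2. split.
  - simpl. destruct (Nat.eqb_spec a x); [congruence | exact H0].
  - intros y T Hy; simpl; destruct (y =? x); [intros E; injection E as <-; auto | apply H; auto].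
Qed.

Lemma output_neutral : forall a n t A G,
  (forall t', size t' < n -> forall A G, typing true G t' A -> normal t' ->
     forall_pos A -> proper A -> ctx_out a G -> ~ free_in a t') ->
  size t < S n -> (forall y u, t <> Lam y u) ->
  typing true G t A -> normal t -> forall_pos A -> ctx_out a G -> ~ free_in a t.
Proof.
  intros a n t A G IHn Hs Hl Ht Hn Hpos Hctx.
  destruct (neutral_head _ Hn Hl) as [x Hx].
  destruct (head_lemma _ _ _ _ Ht x Hx) as [T [HT HN]].
  destruct (Nat.eq_dec x a) as [->|Hxa].
  - destruct Hctx as [H0 _]; rewrite H0 in HT; injection HT as <-.
    pose proof (NT_const _ _ _ _ _ (HN I) 0 eq_refl) as E; subst; inversion Hpos.
  - destruct Hctx as [H0 Hc]; destruct (Hc _ _ Hxa HT) as [HnT HpT].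
    destruct (NT_weaken _ _ _ _ _ (HN (neg_spine _ HnT)) HnT HpT
                (fun v B => ~ free_in a v)) as [HN' _].
    + intros v' B' H1 H2 H3 H4 H5; apply IHn with (A := B') (G := G); auto;
      [lia | split; auto].
    + exact Hn.
    + exact (NT_free _ _ _ _ _ HN' Hxa).
Qed.

Lemma output_main : forall a n t, size t < n -> forall A G, typing true G t A -> normal t ->
  forall_pos A -> proper A -> ctx_out a G -> ~ free_in a t.
Proof.
  intros a; induction n as [|n IHn]; intros t Hs; [lia|].
  induction A as [m|c|B _ C _|A IHA]; intros G Ht Hn Hpos Hpr Hctx.
  - destruct t as [y|y u|u v].
    + eapply output_neutral; eauto; intros; discriminate.
    + exfalso; eapply lam_not_var; eauto.
    + eapply output_neutral; eauto; intros; discriminate.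
  - inversion Hpos.
  - destruct t as [y|y u|u v].
    + eapply output_neutral; eauto; intros; discriminate.
    + apply lam_arrow in Ht; inversion Hpos; subst; destruct Hpr.
      simpl; intros [Hya Hf]; revert Hf.
      apply IHn with (A := C) (G := (y, B) :: G); auto;
      [simpl in Hs; lia | apply ctx_out_cons; auto].
    + eapply output_neutral; eauto; intros; discriminate.
  - inversion Hpos; subst. destruct Hpr as [Hocc Hpr'].
    apply IHA with (G := shift_ctx G); auto;
    [apply typing_strip; auto | apply ctx_out_shift; auto].
Qed.

Theorem theorem2p2p4 (D : ty) :
  closed_ty D -> proper D -> forall_pos D -> ~ contains_O D ->
  syntactical_data_type D.
Proof.
  intros Hc Hp Hpos HO.
  split; split; auto; split; auto.
  - intros t Hn Ht.
    apply (input_main (S (size t)) t (Nat.lt_succ_diag_r _) D []); auto.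
    intros y T H; discriminate H.
  - split; auto. intros t a Hn Ht.
    apply (output_main a (S (size t)) t (Nat.lt_succ_diag_r _) D [(a, O_const)]); auto.
    split; [simpl; rewrite Nat.eqb_refl; reflexivity|].
    intros y T Hy H; simpl in H. apply Nat.eqb_neq in Hy; rewrite Hy in H; discriminate.
Qed.
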